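(* For $n\ge1$ and $k\ge1$, the number of plane trees with $n$ edges and exactly $k$ old leaves is $$\frac{2^{n-2k+1}}{k}\binom{n-1}{2k-2}\binom{2k-2}{k-1}.$$
   Context: A plane tree is a rooted tree in which the children of each vertex are linearly ordered (left to right). A leaf is a vertex with no children; by convention the tree consisting of a single vertex (no edges) has no leaves. A leaf is an old leaf if it is the leftmost child of its parent, and a young leaf otherwise. *)

(* Defs.v *)
From mathcomp Require Import all_boot all_order all_algebra.
From Stdlib Require List.
Set Implicit Arguments. Unset Strict Implicit. Unset Printing Implicit Defensive.

(* A plane tree: a root together with the ordered (left-to-right) list of
   subtrees hanging from its children. *)
Inductive ptree : Type := Node of seq ptree.

Definition children (t : ptree) : seq ptree := let: Node cs := t in cs.

Fixpoint edges (t : ptree) : nat :=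
  let: Node cs := t in size cs + sumn (map edges cs).

Definition leafb (t : ptree) : nat := if t is Node [::] then 1 else 0.

(* number of old leaves: leaves that are the leftmost child of their parent.
   The root is never a leaf (it is not a child), so the one-vertex tree has
   no leaves, as per the convention. *)
Fixpoint old_leaves (t : ptree) : nat :=
  let: Node cs := t in
  (if cs is c :: _ then leafb c else 0) + sumn (map old_leaves cs).

(* Main.v *)
Require Import Defs.
From HB Require Import structures.
From mathcomp Require Import all_boot all_order all_algebra zify ring.
From Stdlib Require List.

Fixpoint enc (t : ptree) : GenTree.tree unit :=
  let: Node cs := t in GenTree.Node 0 (map enc cs).
Fixpoint dec (g : GenTree.tree unit) : ptree :=
  match g with GenTree.Leaf _ => Node [::] | GenTree.Node _ ts => Node (map dec ts) end.
Fixpoint encK (t : ptree) : dec (enc t) = t :=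
  match t with Node cs => f_equal Node
   ((fix aux (cs : seq ptree) : map dec (map enc cs) = cs :=
      match cs with [::] => erefl | c :: cs' => f_equal2 cons (encK c) (aux cs') end) cs) end.
HB.instance Definition _ := Countable.copy ptree (pcan_type (can_pcan encK)).

Notation L0 := (Node [::]).
Notation L1 := (Node [:: L0]).
Definition u1 (f : seq ptree) := if f is c :: f' then Node [:: c] :: f' else f.
Definition u2 (f : seq ptree) :=
  if f is Node (c :: rest) :: f' then Node (c :: L0 :: rest) :: f' else f.
Definition bn (f : seq ptree) :=
  if f is Node (c :: rest) :: d :: f' then Node (c :: d :: rest) :: f' else f.

Fixpoint E (n r : nat) : seq (seq ptree) :=
  match n with
  | 0 => if r == 0 then [:: [::]] else [::]
  | n'.+1 => match r with 0 => [::] | r'.+1 =>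
      map (cons L1) (E n' r') ++ map u1 (E n' r) ++ map u2 (E n' r) ++ map bn (E n' r.+1) end
  end.

Definition ne (t : ptree) := children t != [::].
Definition good n r (f : seq ptree) :=
  [&& size f == r, all ne f & sumn (map edges f) == n].

Lemma E_good n r f : f \in E n r -> good n r f.
Proof.
elim: n r f => [|n IH] r f /=.
  by case: r => [|r]; rewrite ?in_nil ?inE // => /eqP ->.
case: r => // r; rewrite !mem_cat => /or4P [] /mapP [g /IH /and3P [/eqP Hs Ha /eqP He] ->].
- by rewrite /good /= Hs Ha He; apply/and3P; split => //; apply/eqP; lia.
- case: g Hs Ha He => // c g /= [Hs] /andP [Hc Ha] He.
  rewrite /good /= Hs Ha; apply/and3P; split => //; apply/eqP; lia.
- case: g Hs Ha He => // -[[|c rest]] g //= [Hs] Ha He.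
  rewrite /good /= Hs Ha; apply/and3P; split => //; apply/eqP; lia.
- case: g Hs Ha He => // -[[|c rest]] [|d g] //= [Hs] /andP [_ Ha] He.
  rewrite /good /= Hs Ha; apply/and3P; split => //; apply/eqP; lia.
Qed.

Lemma E_complete n r f : good n r f -> f \in E n r.
Proof.
elim: n r f => [|n IH] r f.
  case: f => [|[cs] f] /and3P [/eqP <- Ha He] /=; first by rewrite inE.
  move: Ha He; rewrite /ne /=; case: cs => //= c cs _; lia.
case: f => [|[cs] f] /and3P [/eqP <- Ha He] //=.
move: Ha He; rewrite /ne /= => /andP [Hcs Ha] He.
rewrite !mem_cat; case: cs Hcs He => // c [|d rest] _ He.
- case: c He => [[|c0 cs0]] He.
  + apply/or4P; constructor 1; apply/mapP; exists f => //; apply: IH.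
    by rewrite /good eqxx Ha /=; apply/eqP; move: He => /= /eqP; lia.
  + apply/or4P; constructor 2; apply/mapP; exists (Node (c0 :: cs0) :: f) => //; apply: IH.
    by rewrite /good /= eqxx Ha /ne /=; apply/eqP; move: He => /= /eqP; lia.
- case: d He => [[|d0 ds0]] He.
  + apply/or4P; constructor 3; apply/mapP; exists (Node (c :: rest) :: f) => //; apply: IH.
    by rewrite /good /= eqxx Ha /ne /=; apply/eqP; move: He => /= /eqP; lia.
  + apply/or4P; constructor 4; apply/mapP; exists (Node (c :: rest) :: Node (d0 :: ds0) :: f) => //; apply: IH.
    by rewrite /good /= eqxx Ha /ne /=; apply/eqP; move: He => /= /eqP; lia.
Qed.

Definition cls (f : seq ptree) : nat :=
  match f with
  | Node [:: Node [::]] :: _ => 0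
  | Node [:: _] :: _ => 1
  | Node (_ :: Node [::] :: _) :: _ => 2
  | _ => 3 end.

Lemma disj (s1 t : seq (seq ptree)) i :
  {in s1, forall x, cls x = i} -> {in t, forall x, cls x != i} -> ~~ has (mem s1) t.
Proof.
move=> H1 H2; apply/hasPn => y Hy; apply/negP => /H1 Hc.
by move: (H2 y Hy); rewrite Hc eqxx.
Qed.

Lemma E_uniq n r : uniq (E n r).
Proof.
elim: n r => [|n IH] r /=; first by case: r.
case: r => // r.
have c0 : {in [seq L1 :: i | i <- E n r], forall x, cls x = 0}.
  by move=> x /mapP [g _ ->].
have c1 : {in [seq u1 i | i <- E n r.+1], forall x, cls x = 1}.
  move=> x /mapP [g /E_good /and3P [Hs Ha _] ->].
  by case: g Hs Ha => // -[[|c cs]] g //=.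
have c2 : {in [seq u2 i | i <- E n r.+1], forall x, cls x = 2}.
  move=> x /mapP [g /E_good /and3P [Hs Ha _] ->].
  by case: g Hs Ha => // -[[|c cs]] g //=; case: c => -[].
have c3 : {in [seq bn i | i <- E n r.+2], forall x, cls x = 3}.
  move=> x /mapP [g /E_good /and3P [Hs Ha _] ->].
  by case: g Hs Ha => // -[[|c cs]] [|[[|d ds]] g] //=; case: c => -[].
rewrite !cat_uniq; apply/and4P; split.
- by rewrite map_inj_in_uniq ?IH // => g g' _ _ [].
- by apply: (@disj _ _ 0) => // x; rewrite !mem_cat => /or3P [/c1 -> | /c2 -> | /c3 ->].
- rewrite map_inj_in_uniq ?IH // => g g' /E_good /and3P [Hs Ha _] /E_good /and3P [Hs' Ha' _].
  by case: g Hs Ha => // c g; case: g' Hs' Ha' => // c' g' _ _ _ _ [->->].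
apply/and4P; split.
- by apply: (@disj _ _ 1) => // x; rewrite !mem_cat => /orP [/c2 -> | /c3 ->].
- rewrite map_inj_in_uniq ?IH // => g g' /E_good /and3P [Hs Ha _] /E_good /and3P [Hs' Ha' _].
  by case: g Hs Ha => // -[[|c cs]] g //; case: g' Hs' Ha' => // -[[|c' cs']] g' // _ _ _ _ [->->->].
- by apply: (@disj _ _ 2) => // x /c3 ->.
- rewrite map_inj_in_uniq ?IH // => g g' /E_good /and3P [Hs Ha _] /E_good /and3P [Hs' Ha' _].
  case: g Hs Ha => // -[[|c cs]] [|d g] //; case: g' Hs' Ha' => // -[[|c' cs']] [|d' g'] //.
  by move=> _ _ _ _ [->->->->].
Qed.

Definition oldF (f : seq ptree) := sumn (map old_leaves f).
Definition cnt n r k := count (fun f => oldF f == k) (E n r).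

Lemma cnt_rec n r k :
  cnt n.+1 r.+1 k = (if k is k'.+1 then cnt n r k' else 0) + 2 * cnt n r.+1 k + cnt n r.+2 k.
Proof.
rewrite /cnt /= !count_cat !count_map mul2n -addnn !addnA; congr (_ + _ + _ + _).
- case: k => [|k].
    by rewrite (eq_count (a2 := pred0)) ?count_pred0 // => f /=.
  by apply: eq_count => f /=.
- apply: eq_in_count => g /E_good /and3P [Hs Ha _] /=.
  by case: g Hs Ha => // -[[|c cs]] g //= _ _; rewrite /oldF /= addn0.
- apply: eq_in_count => g /E_good /and3P [Hs Ha _] /=.
  by case: g Hs Ha => // -[[|c cs]] g //=.
- apply: eq_in_count => g /E_good /and3P [Hs Ha _] /=.
  case: g Hs Ha => // -[[|c cs]] [|d g] //= _ _.
  by rewrite /oldF /= !addnA; congr (_ == _); lia.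
Qed.
Definition M k b u := 'C(k + (b + u), k) * 'C(b + u, b).
Lemma Mfact k b u : M k b u * (k`! * (b`! * u`!)) = (k + (b + u))`!.
Proof.
have h1 := bin_fact (leq_addr u b); rewrite addKn in h1.
have h2 := bin_fact (leq_addr (b + u) k); rewrite addKn in h2.
rewrite /M -h2 -h1; ring.
Qed.
Lemma Pgt0 k b u : 0 < k`! * (b`! * u`!).
Proof. by rewrite !muln_gt0 !fact_gt0. Qed.
Lemma MK k b u : (k + (b + u)).+1 * M k b u = k.+1 * M k.+1 b u.
Proof.
apply/eqP; rewrite -(eqn_pmul2r (Pgt0 k b u)) -mulnA Mfact -factS.
rewrite -addSn -(Mfact k.+1) factS; apply/eqP; ring.
Qed.
Lemma MB k b u : (k + (b + u)).+1 * M k b u = b.+1 * M k b.+1 u.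
Proof.
apply/eqP; rewrite -(eqn_pmul2r (Pgt0 k b u)) -mulnA Mfact -factS.
rewrite -addnS -addSn -(Mfact k b.+1) factS; apply/eqP; ring.
Qed.
Lemma MU k b u : (k + (b + u)).+1 * M k b u = u.+1 * M k b u.+1.
Proof.
apply/eqP; rewrite -(eqn_pmul2r (Pgt0 k b u)) -mulnA Mfact -factS.
rewrite -!addnS -(Mfact k b u.+1) factS; apply/eqP; ring.
Qed.

Definition G n r k :=
  if (r <= k) && (k + (k - r) <= n) then r * M k (k - r) (n - k - (k - r)) * 2 ^ (n - k - (k - r)) else 0.

Lemma G_eq n r k b u : k = r + b -> n = r + b + b + u -> G n r k = r * M k b u * 2 ^ u.
Proof.
move=> -> ->; rewrite /G.
have -> : r + b - r = b by lia.
have -> : r + b + b + u - (r + b) - b = u by lia.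
rewrite ifT //; apply/andP; split; lia.
Qed.

Lemma G_zero n r k : ~~ ((r <= k) && (k + (k - r) <= n)) -> G n r k = 0.
Proof. by rewrite /G => /negbTE ->. Qed.

Lemma test n r k : ~~ ((r.+1 <= k) && (k + (k - r.+1) <= n.+1)) -> ~~ ((r.+2 <= k) && (k + (k - r.+2) <= n)).
Proof. move=> H. lia. Qed.

Lemma Gid n r k :
  n.+1 * ((if k is k'.+1 then G n r k' else 0) + 2 * G n r.+1 k + G n r.+2 k)
  = n * G n.+1 r.+1 k.
Proof.
case: (boolP ((r.+1 <= k) && (k + (k - r.+1) <= n.+1))) => H; last first.
  rewrite (@G_zero n.+1 r.+1 k H) muln0 (@G_zero (n) (r.+1) _) ?(@G_zero (n) (r.+2) _); try lia.
  by case: k H => [|k] H; rewrite ?muln0 // G_zero ?muln0 //; lia.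
have [b Hb] : exists b, k = (r + b).+1 by exists (k - r.+1); lia.
have [u Hu] : exists u, n = r + b + b + u by exists (n - (r + b + b)); lia.
subst k n; clear H.
have -> : G (r + b + b + u) r (r + b) = r * M (r + b) b u * 2 ^ u by apply: G_eq; lia.
have -> : G (r + b + b + u).+1 r.+1 (r + b).+1 = r.+1 * M (r + b).+1 b u * 2 ^ u by apply: G_eq; lia.
have ha : (r + b + b + u).+1 * M (r + b) b u = (r + b).+1 * M (r + b).+1 b u.
  by rewrite -MK; congr (_ * _); lia.
case: u ha => [|u] ha.
  rewrite (@G_zero (r + b + b + 0) (r.+1) _); last by lia.
  case: b ha => [|b] ha.
    rewrite (@G_zero (r + 0 + 0 + 0) (r.+2) _); last by lia.
    transitivity (r * ((r + 0 + 0 + 0).+1 * M (r + 0) 0 0) * 2 ^ 0); first by ring.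
    rewrite ha; ring.
  have -> : G (r + b.+1 + b.+1 + 0) r.+2 (r + b.+1).+1 = r.+2 * M (r + b.+1).+1 b 0 * 2 ^ 0 by apply: G_eq; lia.
  have hc : (r + b + b + 0).+3 * M (r + b.+1).+1 b 0 = b.+1 * M (r + b.+1).+1 b.+1 0.
    by rewrite -MB; congr (_ * _); lia.
  transitivity (r * ((r + b.+1 + b.+1 + 0).+1 * M (r + b.+1) b.+1 0) * 2 ^ 0
     + r.+2 * ((r + b + b + 0).+3 * M (r + b.+1).+1 b 0) * 2 ^ 0).
    ring.
  rewrite ha hc; ring.
have -> : G (r + b + b + u.+1) r.+1 (r + b).+1 = r.+1 * M (r + b).+1 b u * 2 ^ u by apply: G_eq; lia.
have hb : (r + b + b + u).+2 * M (r + b).+1 b u = u.+1 * M (r + b).+1 b u.+1.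
  by rewrite -MU; congr (_ * _); lia.
case: b ha hb => [|b] ha hb.
  rewrite (@G_zero (r + 0 + 0 + u.+1) (r.+2) _); last by lia.
  transitivity (r * ((r + 0 + 0 + u.+1).+1 * M (r + 0) 0 u.+1) * 2 ^ u.+1
     + 2 * r.+1 * ((r + 0 + 0 + u).+2 * M (r + 0).+1 0 u) * 2 ^ u).
    ring.
  rewrite ha hb expnS; ring.
have -> : G (r + b.+1 + b.+1 + u.+1) r.+2 (r + b.+1).+1 = r.+2 * M (r + b.+1).+1 b u.+1 * 2 ^ u.+1 by apply: G_eq; lia.
have hc : (r + b.+1 + b.+1 + u.+1).+1 * M (r + b.+1).+1 b u.+1 = b.+1 * M (r + b.+1).+1 b.+1 u.+1.
  by rewrite -MB; congr (_ * _); lia.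
transitivity (r * ((r + b.+1 + b.+1 + u.+1).+1 * M (r + b.+1) b.+1 u.+1) * 2 ^ u.+1
   + 2 * r.+1 * ((r + b.+1 + b.+1 + u).+2 * M (r + b.+1).+1 b.+1 u) * 2 ^ u
   + r.+2 * ((r + b.+1 + b.+1 + u.+1).+1 * M (r + b.+1).+1 b u.+1) * 2 ^ u.+1).
  rewrite expnS; ring.
rewrite ha hb hc expnS; ring.
Qed.

Lemma cntG n r k : n * cnt n r k = G n r k.
Proof.
elim: n r k => [|n IH] r k.
  rewrite mul0n /G; case: ifP => // /andP [h1 h2].
  by have -> : r = 0 by lia.
case: r => [|r].
  by rewrite /cnt /= muln0 /G mul0n; case: ifP.
case: n IH => [|n] IH.
  case: r => [|r].
    by rewrite /cnt /= /G; case: k => [|[|k]] //=.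
  rewrite /cnt /= /G; case: ifP => // /andP [h1 h2]; lia.
apply/eqP; rewrite -(eqn_pmul2l (ltn0Sn n)); apply/eqP.
rewrite -Gid mulnCA cnt_rec; congr (n.+2 * _).
rewrite mulnDr mulnDr (mulnCA n.+1 2) !IH.
by case: k => [|k]; rewrite ?muln0 ?IH.
Qed.

Lemma inP (T : eqType) (x : T) (s : seq T) : List.In x s <-> x \in s.
Proof.
elim: s => [|y s IH] //=; rewrite inE; split.
- by case=> [->|/IH ->]; rewrite ?eqxx ?orbT.
- by case/orP => [/eqP ->|/IH]; [left | right].
Qed.

Lemma uniqP' (T : eqType) (s : seq T) : uniq s -> List.NoDup s.
Proof.
elim: s => [|y s IH] /=; first by constructor.
case/andP => Hy Hu; constructor; last exact: IH.
by move/inP; apply/negP.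
Qed.

Lemma bigid j u :
  j.+1 * M j.+1 j u = (j + j + u).+1 * 'C(j + j + u, j + j) * 'C(j + j, j).
Proof.
apply/eqP; rewrite -(eqn_pmul2r (Pgt0 j j u)); apply/eqP.
have h0 := Mfact j.+1 j u.
have h1 := bin_fact (leq_addr u (j + j)); rewrite addKn in h1.
have h2 := bin_fact (leq_addr j j); rewrite addKn in h2.
rewrite factS in h0.
have -> : j.+1 * M j.+1 j u * (j`! * (j`! * u`!)) = M j.+1 j u * (j.+1 * j`! * (j`! * u`!)) by ring.
rewrite h0.
have -> : (j + j + u).+1 * 'C(j + j + u, j + j) * 'C(j + j, j) * (j`! * (j`! * u`!))
  = (j + j + u).+1 * ('C(j + j + u, j + j) * (('C(j + j, j) * (j`! * j`!)) * u`!)) by ring.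
by rewrite h2 h1 -factS; congr (_`!); lia.
Qed.

Import GRing.Theory Num.Theory.
Local Open Scope ring_scope.

Theorem mainTheorem3 (n k : nat) (hn : (1 <= n)%N) (hk : (1 <= k)%N) :
  exists s : seq ptree,
    List.NoDup s /\
    (forall t : ptree, List.In t s <-> (edges t = n /\ old_leaves t = k)) /\
    (size s)%:R =
      (2 : rat) ^ (n%:Z - (2 * k)%:Z + 1) / k%:R
        * 'C(n.-1, (2 * k - 2)%N)%:R * 'C((2 * k - 2)%N, k.-1)%:R.
Proof.
pose s := [seq head L0 f | f <- E n 1 & oldF f == k].
have Hgood : forall f, f \in E n 1 -> exists t, f = [:: t] /\ ne t /\ edges t = n.
  move=> f /E_good /and3P [Hs Ha He].
  case: f Hs Ha He => [|t [|? ?]] //= _ /andP [Ht _] /eqP He.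
  by exists t; split => //; split => //; lia.
exists s; split; [|split].
- apply: uniqP'; rewrite map_inj_in_uniq ?filter_uniq ?E_uniq //.
  move=> f g; rewrite !mem_filter => /andP [_ /Hgood [t [-> _]]] /andP [_ /Hgood [t' [-> _]]] /= ->.
  by [].
- move=> t; rewrite inP; split.
  + case/mapP => f; rewrite mem_filter => /andP [/eqP Hk /Hgood [t' [Hf [_ He]]]] ->.
    by subst f; rewrite /oldF /= addn0 in Hk.
  + case=> He Ho; apply/mapP; exists [:: t] => //.
    rewrite mem_filter /oldF /= addn0 Ho eqxx /=; apply: E_complete.
    rewrite /good /= He addn0 eqxx !andbT.
    case: t He {Ho} => -[|c cs] //= He.
    by move: hn; rewrite -He.
rewrite size_map size_filter -/(cnt n 1 k).
have hc := cntG n 1 k.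
case: (boolP ((1 <= k) && (k + (k - 1) <= n))%N) => H; last first.
  have -> : cnt n 1 k = 0%N.
    apply/eqP; rewrite -(eqn_pmul2l hn) muln0 hc G_zero //.
  rewrite bin_small ?mulr0 ?mul0r //; lia.
have [j Hj] : exists j, k = j.+1 by exists (k - 1)%N; lia.
have [u Hu] : exists u, n = (j + j + u).+1 by exists (n - (j + j).+1)%N; lia.
subst k n; clear H.
rewrite (@G_eq _ _ _ j u) // in hc.
have Hn : (j.+1 * cnt (j + j + u).+1 1 j.+1 = 'C(j + j + u, j + j) * 'C(j + j, j) * 2 ^ u)%N.
  apply/eqP; rewrite -(eqn_pmul2l (ltn0Sn (j + j + u))) mulnCA hc mul1n mulnA bigid.
  by apply/eqP; ring.
have -> : (2 * j.+1 - 2 = j + j)%N by lia.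
have -> : ((j + j + u).+1%:Z - (2 * j.+1)%:Z + 1 = u%:Z).
  have e : ((j + j + u).+1 + 1 = 2 * j.+1 + u)%N by lia.
  by rewrite addrAC -(PoszD _ 1) e PoszD addrAC subrr add0r.
rewrite -exprnP /=.
apply: (@mulfI _ (j.+1)%:R); first by rewrite pnatr_eq0.
rewrite -natrM Hn !natrM natrX; field.
by rewrite addrC natr1 pnatr_eq0.
Qed.
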